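(* Let $G$ be a finite non-abelian group. If the non-centralizer graph $\Upsilon_G$ is regular, then $G/Z(G)$ is an elementary abelian $2$-group.
   Context: For a finite group $G$, $C_G(x)$ denotes the centralizer of $x\in G$ and $Z(G)$ the center. The non-centralizer graph $\Upsilon_G$ is the simple graph with vertex set $G$ in which two distinct vertices $x,y$ are adjacent if and only if $C_G(x)\neq C_G(y)$. A graph is regular if all its vertices have the same degree. *)

(* Defs.v *)
From mathcomp Require Import all_boot all_fingroup all_solvable.
Set Implicit Arguments. Unset Strict Implicit. Unset Printing Implicit Defensive.
Local Open Scope group_scope.

Definition noncent_adj (gT : finGroupType) (G : {set gT}) (x y : gT) : bool :=
  (x != y) && ('C_G[x] != 'C_G[y]).

Definition noncent_deg (gT : finGroupType) (G : {set gT}) (x : gT) : nat :=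
  #|[set y in G | noncent_adj G x y]|.

Definition noncent_regular (gT : finGroupType) (G : {set gT}) : Prop :=
  forall x y, x \in G -> y \in G -> noncent_deg G x = noncent_deg G y.

(* Main.v *)
Require Import Defs.
From mathcomp Require Import all_boot all_fingroup all_solvable.
Local Open Scope group_scope.
Set Implicit Arguments. Unset Strict Implicit.

Definition Sx (gT : finGroupType) (G : {set gT}) (x : gT) :=
  [set y in G | 'C_G[x] == 'C_G[y]].

Lemma deg_eq (gT : finGroupType) (G : {group gT}) x :
  noncent_deg G x = #|G| - #|Sx G x|.
Proof.
rewrite /noncent_deg.
have -> : [set y in G | noncent_adj G x y] = G :\: Sx G x.
  apply/setP => y; rewrite !inE /noncent_adj.
  case: (y \in G); rewrite ?andbF ?andbT //=.
  by case: eqP => [->|]; rewrite ?eqxx.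
rewrite cardsD; congr (_ - _); apply: eq_card => y; rewrite !inE; case: (y \in G) => //=; rewrite andbT.
Qed.

Lemma centV_eq (gT : finGroupType) (G : {group gT}) x :
  'C_G[x] = 'C_G[x^-1].
Proof.
apply/setP => g; rewrite !in_setI; case: (g \in G) => //=.
apply/cent1P/cent1P => H; first exact: commuteV.
by rewrite -[x]invgK; apply: commuteV.
Qed.

Lemma centZ_eq (gT : finGroupType) (G : {group gT}) x z :
  z \in 'Z(G) -> 'C_G[x] = 'C_G[x * z].
Proof.
move=> zZ; apply/setP => g; rewrite !in_setI; case gG: (g \in G) => //=.
have cgz : commute g z.
  by move/centerP: zZ => [_ /(_ g gG)] H; apply: commute_sym.
apply/cent1P/cent1P => H; first exact: commuteM.
have -> : x = (x * z) * z^-1 by rewrite mulgK.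
by apply: commuteM => //; apply: commuteV.
Qed.

Theorem theorem2p6 (gT : finGroupType) (G : {group gT}) :
  ~~ abelian G -> noncent_regular G -> 2.-abelem (G / 'Z(G)).
Proof.
move=> _ reg.
have S1 : Sx G 1 = 'Z(G).
  apply/setP => y; rewrite !inE cent11T setIT.
  case yG: (y \in G) => //=.
  by rewrite -sub_cent1 eq_sym; apply/eqP/setIidPl.
have sq : forall x, x \in G -> x ^+ 2 \in 'Z(G).
  move=> x xG.
  have cS : #|Sx G x| = #|'Z(G)|.
    have := reg x 1 xG (group1 G); rewrite !deg_eq S1 => E.
    have hS : #|Sx G x| <= #|G| by apply: subset_leq_card; apply/subsetP => y; rewrite inE => /andP[].
    have hZ : #|'Z(G)| <= #|G| by apply: subset_leq_card; apply: center_sub.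
    have : #|G| - (#|G| - #|Sx G x|) = #|G| - (#|G| - #|'Z(G)|) by rewrite E.
    by rewrite !subKn.
  have sub : x *: 'Z(G) \subset Sx G x.
    apply/subsetP => y /lcosetP[z zZ ->]; rewrite inE.
    rewrite (centZ_eq x zZ) eqxx andbT groupM //.
    by move: zZ; rewrite inE => /andP[].
  have eqS : x *: 'Z(G) = Sx G x.
    by apply/eqP; rewrite eqEcard sub card_lcoset cS leqnn.
  have : x^-1 \in Sx G x by rewrite inE groupV xG -centV_eq eqxx.
  rewrite -eqS mem_lcoset => h.
  have : (x^-1 * x^-1)^-1 \in 'Z(G) by rewrite groupV.
  by rewrite invMg invgK expgS expg1.
apply: exponent2_abelem; apply/exponentP => u /morphimP[x xN xG ->].
rewrite -morphX //= coset_id //.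
by apply: sq.
Qed.
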